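(* There is an absolute constant $c>0$ such that, as $n\to\infty$, the fraction of all $2^{n2^n}$ operators $f:\{0,1\}^n\to\{0,1\}^n$ that satisfy $\mathrm{s}(f)\ge c\,n^2$ tends to $1$. In short: for almost all $n$-operators $f$, $\mathrm{s}(f)=\Omega(n^2)$.
   Context: An $n$-operator is a map $f=(f_1,\dots,f_n):\{0,1\}^n\to\{0,1\}^n$. A (general) circuit is a directed acyclic graph with $n$ input nodes $x_1,\dots,x_n$ (of fanin $0$) and $n$ designated output nodes $y_1,\dots,y_n$. Each non-input node may compute an arbitrary boolean function of the values at its in-neighbours, and there is no restriction on fanin or fanout. The circuit computes $f$ if, for every $i$, the function computed at $y_i$ is $f_i$. The size of a circuit is its total number of wires (edges). $\mathrm{s}(f)$ denotes the minimum size of a circuit computing $f$, with no restriction on depth. *)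

(* Defs.v *)
From Stdlib Require Import ClassicalDescription.
From mathcomp Require Import all_boot all_order all_algebra.
Set Implicit Arguments. Unset Strict Implicit. Unset Printing Implicit Defensive.

Definition operator (n : nat) := {ffun n.-tuple bool -> n.-tuple bool}.

(* A gate: the list of its in-neighbours (node indices; one wire per entry)
   and an arbitrary boolean function of the values at those in-neighbours. *)
Record gate := Gate { gin : seq nat; gfun : seq bool -> bool }.

(* A general circuit on n inputs: nodes 0..n-1 are the inputs x_1..x_n,
   node n+k is the k-th gate (gates listed in a topological order),
   and outs lists the designated output nodes y_1..y_n. *)
Record circuit := Circuit { gates : seq gate; outs : seq nat }.

(* Well-formedness: acyclicity (every wire into gate k comes from a node
   with smaller index), exactly n outputs, all existing nodes. *)
Definition wf_circuit (n : nat) (C : circuit) : Prop :=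
  (forall k, k < size (gates C) ->
     all (fun j => j < n + k) (gin (nth (Gate [::] (fun _ => false)) (gates C) k)))
  /\ size (outs C) = n
  /\ all (fun j => j < n + size (gates C)) (outs C).

Definition eval_nodes (x : seq bool) (gs : seq gate) : seq bool :=
  foldl (fun vals g => rcons vals (gfun g (map (nth false vals) (gin g)))) x gs.

Definition csize (C : circuit) : nat := sumn (map (fun g => size (gin g)) (gates C)).

Definition computes (n : nat) (C : circuit) (f : operator n) : Prop :=
  wf_circuit n C /\
  forall x : n.-tuple bool,
    map (nth false (eval_nodes x (gates C))) (outs C) = val (f x).

(* "s(f) >= r": every circuit computing f has size at least r. *)
Definition s_ge (n : nat) (f : operator n) (r : rat) : Prop :=
  forall C, computes C f -> (r <= (csize C)%:~R)%R.

Definition pb (P : Prop) : bool :=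
  if excluded_middle_informative P then true else false.

(* Main.v *)
Require Import Defs.
Set Warnings "-notation-overridden,-ambiguous-paths".
From Stdlib Require Import Classical ClassicalDescription.
From mathcomp Require Import all_boot all_order all_algebra.
Set Implicit Arguments. Unset Strict Implicit. Unset Printing Implicit Defensive.
Import Order.TTheory GRing.Theory Num.Theory.

Definition g0 := Gate [::] (fun _ => false).

Lemma eval_cons y g gs : eval_nodes y (g :: gs) =
  eval_nodes (rcons y (gfun g (map (nth false y) (gin g)))) gs.
Proof. by []. Qed.

Lemma eval_prefix gs y : exists t, eval_nodes y gs = y ++ t.
Proof.
elim: gs y => [|g gs IH] y; first by exists [::]; rewrite cats0.
rewrite eval_cons; set a := gfun g _; have [t ->] := IH (rcons y a).
by exists (a :: t); rewrite cat_rcons.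
Qed.

Lemma eval_cat y gs1 gs2 : eval_nodes y (gs1 ++ gs2) = eval_nodes (eval_nodes y gs1) gs2.
Proof. by rewrite /eval_nodes foldl_cat. Qed.

Lemma size_eval y gs : size (eval_nodes y gs) = size y + size gs.
Proof.
elim: gs y => [|g gs IH] y; first by rewrite addn0.
by rewrite eval_cons IH size_rcons /= addSnnS.
Qed.

Lemma nth_eval_in y gs j : j < size y -> nth false (eval_nodes y gs) j = nth false y j.
Proof. by move=> hj; have [t ->] := eval_prefix gs y; rewrite nth_cat hj. Qed.

Lemma nth_eval_take y gs k j : j < size y + k ->
  nth false (eval_nodes y gs) j = nth false (eval_nodes y (take k gs)) j.
Proof.
move=> hj; case: (leqP (size gs) k) => hk; first by rewrite take_oversize.
rewrite -{1}(cat_take_drop k gs) eval_cat nth_eval_in // size_eval size_take hk //.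
Qed.

Lemma nth_eval_gate y gs k : k < size gs ->
  nth false (eval_nodes y gs) (size y + k) =
  gfun (nth g0 gs k) (map (nth false (eval_nodes y (take k gs))) (gin (nth g0 gs k))).
Proof.
move=> hk. rewrite -{1}(cat_take_drop k gs) eval_cat (drop_nth g0 hk) eval_cons.
set E := rcons _ _; have [t ->] := eval_prefix (drop k.+1 gs) E.
rewrite /E.
by rewrite nth_cat size_rcons size_eval size_take hk ltnSn nth_rcons size_eval size_take hk ltnn eqxx.
Qed.

Definition wfg n gs := forall k, k < size gs -> all (fun j => j < n + k) (gin (nth g0 gs k)).

Lemma gate_val (x : seq bool) gs k : wfg (size x) gs -> k < size gs ->
  nth false (eval_nodes x gs) (size x + k) =
  gfun (nth g0 gs k) (map (nth false (eval_nodes x gs)) (gin (nth g0 gs k))).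
Proof.
move=> wf hk; rewrite nth_eval_gate //; congr gfun; apply/eq_in_map => j hj.
rewrite [RHS](@nth_eval_take _ _ k) //; exact: (allP (wf k hk)).
Qed.
Fixpoint allseqs d : seq (seq bool) :=
  if d is d'.+1 then [seq b :: v | b <- [:: true; false], v <- allseqs d'] else [:: [::]].

Lemma allseqsP v : v \in allseqs (size v).
Proof.
elim: v => [|b v IH] //=; rewrite mem_cat; apply/orP.
by case: b; [left | right; rewrite mem_cat; apply/orP; left]; exact: map_f.
Qed.

Lemma size_allseqs d : size (allseqs d) = 2 ^ d.
Proof. by elim: d => //= d IH; rewrite !size_cat !size_map IH expnS addn0 mul2n addnn. Qed.

Definition tbl g := map (gfun g) (allseqs (size (gin g))).
Definition fan gs := map (fun g => size (gin g)) gs.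
Definition srcs gs := flatten (map gin gs).
Definition tabs gs := flatten (map tbl gs).

Lemma eval_eq y gs1 gs2 : map gin gs1 = map gin gs2 -> map tbl gs1 = map tbl gs2 ->
  eval_nodes y gs1 = eval_nodes y gs2.
Proof.
elim: gs1 gs2 y => [|g1 gs1 IH] [|g2 gs2] y // [e1 e2] [t1 t2].
rewrite !eval_cons -e1.
have -> : gfun g1 (map (nth false y) (gin g1)) = gfun g2 (map (nth false y) (gin g1)).
  move: t1; rewrite /tbl -e1 => /eq_in_map; apply.
  by rewrite -(size_map (nth false y) (gin g1)); exact: allseqsP.
exact: IH.
Qed.

Lemma fan_shape gs : fan gs = shape (map gin gs).
Proof. by rewrite /fan /shape -map_comp. Qed.

Lemma tabs_shape gs : shape (map tbl gs) = map (expn 2) (fan gs).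
Proof. by rewrite /shape /fan -!map_comp; apply: eq_map => g /=; rewrite /tbl size_map size_allseqs. Qed.

Lemma code_eval y gs1 gs2 : fan gs1 = fan gs2 -> srcs gs1 = srcs gs2 -> tabs gs1 = tabs gs2 ->
  eval_nodes y gs1 = eval_nodes y gs2.
Proof.
move=> ef es et; apply: eval_eq.
  by rewrite -(flattenK (map gin gs1)) -(flattenK (map gin gs2)) -!fan_shape ef -/(srcs gs1) es.
rewrite -(flattenK (map tbl gs1)) -(flattenK (map tbl gs2)) !tabs_shape ef.
by rewrite -/(tabs gs1) et.
Qed.
Lemma filter_nth_count (T : eqType) (x0 : T) (p : pred T) s k : k < size s -> p (nth x0 s k) ->
  count p (take k s) < size (filter p s) /\
  nth x0 (filter p s) (count p (take k s)) = nth x0 s k.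
Proof.
elim: s k => [|a s IH] [|k] //= hk hp; first by rewrite hp.
have [h1 h2] := IH k hk hp; case: (p a) => /=; by rewrite ?add1n ?add0n.
Qed.

Lemma filter_nth_inv (T : eqType) (x0 : T) (p : pred T) s i : i < size (filter p s) ->
  exists k, [/\ k < size s, p (nth x0 s k), count p (take k s) = i &
             nth x0 (filter p s) i = nth x0 s k].
Proof.
elim: s i => [|a s IH] i //=; case: ifP => pa /=.
  case: i => [|i] hi; first by exists 0; rewrite pa.
  have [k [h1 h2 h3 h4]] := IH i hi; exists k.+1; by rewrite /= pa h3.
move=> hi; have [k [h1 h2 h3 h4]] := IH i hi; exists k.+1; by rewrite /= pa h3.
Qed.

Definition fin gs k := size (gin (nth g0 gs k)).
Definition pos gs k := 0 < fin gs k.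
Definition rk gs k := count (pos gs) (iota 0 k).
Definition enc n gs j := if j < n then j else
   if fin gs (j - n) == 0 then n + gfun (nth g0 gs (j - n)) [::] else n + (rk gs (j - n)).+2.
Definition mk n gs k := if n <= fin gs k
   then Gate (iota 0 n) (fun v => nth false (eval_nodes v gs) (n + k))
   else Gate (map (enc n gs) (gin (nth g0 gs k))) (gfun (nth g0 gs k)).
Definition idx gs := filter (pos gs) (iota 0 (size gs)).
Definition cgates n gs := Gate [::] (fun _ => false) :: Gate [::] (fun _ => true) ::
   map (mk n gs) (idx gs).

Lemma rk_mono gs k' k : k' < k -> pos gs k' -> rk gs k' < rk gs k.
Proof.
move=> hk hp; rewrite /rk -(subnKC (ltnW hk)) iotaD count_cat add0n -ltn_subLR ?subnn //.
by rewrite -(subnSK hk) /= hp.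
Qed.

Lemma idx_nth gs k : k < size gs -> pos gs k ->
  rk gs k < size (idx gs) /\ nth 0 (idx gs) (rk gs k) = k.
Proof.
move=> hk hp; have := @filter_nth_count _ 0 (pos gs) (iota 0 (size gs)) k.
rewrite size_iota nth_iota // add0n take_iota (minn_idPl (ltnW hk)); by apply.
Qed.

Lemma idx_inv gs i : i < size (idx gs) ->
  exists k, [/\ k < size gs, pos gs k, rk gs k = i & nth 0 (idx gs) i = k].
Proof.
move=> hi; have [k [h1 h2 h3 h4]] := @filter_nth_inv _ 0 (pos gs) (iota 0 (size gs)) i hi.
rewrite size_iota in h1; rewrite nth_iota // add0n in h2 h4.
by exists k; split=> //; rewrite -h3 /rk take_iota (minn_idPl (ltnW h1)).
Qed.

Lemma enc_lt n gs k j : j < n + k -> k <= size gs -> enc n gs j < n + (rk gs k).+2.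
Proof.
move=> hj hk; rewrite /enc; case: ifP => hn; first exact: ltn_addr.
move/negbT: hn; rewrite -leqNgt => hn.
case: ifP => hf.
  by rewrite ltn_add2l; case: (gfun _ _).
rewrite ltn_add2l ltnS; apply: rk_mono; first by rewrite ltn_subLR.
by rewrite /pos lt0n hf.
Qed.

Lemma wf_cgates n gs : wfg n gs -> wfg n (cgates n gs).
Proof.
move=> wf [|[|i]] //=; rewrite !ltnS size_map => hi.
have [k [h1 h2 h3 h4]] := idx_inv hi.
rewrite (nth_map 0) // h4 /mk; case: ifP => hb /=.
  by apply/allP => j; rewrite mem_iota add0n => hj; apply: ltn_addr.
apply/allP => j /mapP [j' hj' ->]; rewrite -h3; apply: enc_lt; last exact: ltnW.
exact: (allP (wf k h1)).
Qed.
Lemma size_cgates n gs : size (cgates n gs) = (size (idx gs)).+2.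
Proof. by rewrite /= size_map. Qed.

Lemma nth_cgates n gs i : i < size (idx gs) ->
  nth g0 (cgates n gs) i.+2 = mk n gs (nth 0 (idx gs) i).
Proof. by move=> hi; rewrite /= (nth_map 0). Qed.

Lemma map_nth_x (x : seq bool) gs' :
  map (nth false (eval_nodes x gs')) (iota 0 (size x)) = x.
Proof.
rewrite -[RHS](mkseq_nth false x) /mkseq; apply/eq_in_map => i.
by rewrite mem_iota add0n => /andP [_ hi]; rewrite nth_eval_in.
Qed.

Lemma enc_val (x : seq bool) gs : wfg (size x) gs ->
  forall j, j < size x + size gs ->
  nth false (eval_nodes x (cgates (size x) gs)) (enc (size x) gs j) =
  nth false (eval_nodes x gs) j.
Proof.
move=> wf j; elim/ltn_ind: j => j IH hj.
have wf' := wf_cgates wf.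
rewrite /enc; case: ifP => hn; first by rewrite !nth_eval_in.
move/negbT: hn; rewrite -leqNgt => hn.
set k := j - size x; have ej : j = size x + k by rewrite subnKC.
have hk : k < size gs by rewrite -(ltn_add2l (size x)) -ej.
rewrite [in RHS]ej.
case: ifP => hf.
  rewrite [RHS]gate_val //; move/eqP: hf; rewrite /fin => /size0nil ->.
  case: (gfun (nth g0 gs k) [::]).
    by rewrite (gate_val wf') // size_cgates.
  by rewrite (gate_val wf') // size_cgates.
have hp : pos gs k by rewrite /pos lt0n hf.
have [hr hnth] := idx_nth hk hp.
rewrite (gate_val wf') ?size_cgates // nth_cgates // hnth /mk.
case: ifP => hb.
  by rewrite (_ : gin (Gate _ _) = iota 0 (size x)) // map_nth_x.
rewrite [RHS]gate_val // -map_comp; congr gfun; apply/eq_in_map => j' hj'.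
have hj'k : j' < size x + k by exact: (allP (wf k hk)).
apply: IH; first by rewrite ej.
by apply: (ltn_trans hj'k); rewrite ltn_add2l.
Qed.
Lemma sumn_filter_le (F : nat -> nat) p s : sumn (map F (filter p s)) <= sumn (map F s).
Proof.
elim: s => //= a s IH; case: (p a) => /=; first by rewrite leq_add2l.
exact: (leq_trans IH (leq_addl _ _)).
Qed.

Lemma count_le_sumn (F : nat -> nat) s : count (fun k => 0 < F k) s <= sumn (map F s).
Proof. by elim: s => //= a s IH; apply: leq_add => //; case: (F a). Qed.

Lemma sumn_map_le (T : Type) (F G : T -> nat) s : (forall x, F x <= G x) ->
  sumn (map F s) <= sumn (map G s).
Proof. by move=> h; elim: s => //= a s IH; apply: leq_add. Qed.

Lemma csize_iota gs : sumn (map (fun g => size (gin g)) gs) = sumn (map (fin gs) (iota 0 (size gs))).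
Proof. by rewrite -{1}(mkseq_nth g0 gs) /mkseq -map_comp. Qed.

Lemma enc_out n gs j : j < n + size gs -> enc n gs j < n + size (cgates n gs).
Proof.
move=> hj; rewrite size_cgates /enc; case: ifP => hn; first exact: ltn_addr.
move/negbT: hn; rewrite -leqNgt => hn.
have hk : j - n < size gs by rewrite ltn_subLR.
case: ifP => hf; first by rewrite ltn_add2l; case: (gfun _ _).
rewrite ltn_add2l ltnS; case: (idx_nth hk _) => //; by rewrite /pos lt0n hf.
Qed.

Lemma enc_val' n (x : seq bool) gs j : size x = n -> wfg n gs -> j < n + size gs ->
  nth false (eval_nodes x (cgates n gs)) (enc n gs j) = nth false (eval_nodes x gs) j.
Proof. by move=> <- wf hj; exact: enc_val. Qed.

Lemma normalize n C (f : operator n) : computes C f -> exists C', computes C' f /\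
  csize C' <= csize C /\ size (gates C') <= (csize C).+2 /\
  all (fun g => size (gin g) <= n) (gates C').
Proof.
case=> [[wf [so ao]] hf].
set gs := gates C in wf ao hf *.
have wf1 : wfg n gs by [].
exists (Circuit (cgates n gs) (map (enc n gs) (outs C))).
have hcs : csize C = sumn (map (fin gs) (iota 0 (size gs))) by rewrite /csize csize_iota.
split; [split; [split; [exact: wf_cgates | split]|] | split; [|split]].
- by rewrite /= size_map.
- by apply/allP => j /mapP [j' hj' ->]; apply: enc_out; exact: (allP ao).
- move=> x; rewrite -hf [outs _]/= -map_comp; apply/eq_in_map => j hj.
  exact: (enc_val' (size_tuple x) wf1 (allP ao j hj)).
- rewrite hcs /csize /= !add0n /idx -map_comp.
  apply: (leq_trans _ (sumn_filter_le (fin gs) (pos gs) _)).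
  apply: sumn_map_le => k; rewrite /comp /mk.
  by case: ifP => hb; rewrite ?size_iota ?size_map.
- rewrite /= size_map ltnS ltnS hcs /idx size_filter; exact: count_le_sumn.
- rewrite [gates _]/= /cgates /=; elim: (idx gs) => //= k s IH; rewrite IH andbT /mk.
  case: ifP => hb; first by rewrite size_iota.
  by rewrite size_map ltnW // ltnNge hb.
Qed.
Definition PT L K := ('I_L.+1 * L.-tuple 'I_K.+1)%type.
Definition pad L K (s : seq nat) : PT L K :=
  (inord (size s), [tuple inord (nth 0 s i) | i < L]).

Lemma card_PT L K : #|{: PT L K}| = L.+1 * K.+1 ^ L.
Proof. by rewrite card_prod card_ord card_tuple card_ord. Qed.

Lemma pad_inj L K s1 s2 : size s1 <= L -> size s2 <= L ->
  all (fun a => a <= K) s1 -> all (fun a => a <= K) s2 -> pad L K s1 = pad L K s2 -> s1 = s2.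
Proof.
move=> h1 h2 a1 a2 e; have es := congr1 fst e; have et := congr1 snd e; simpl in es, et.
have ss : size s1 = size s2 by have := congr1 (@nat_of_ord _) es; rewrite !inordK ?ltnS.
apply: (eq_from_nth (x0:=0) ss) => i hi.
have hiL : i < L by exact: leq_trans hi h1.
have := congr1 (fun t => nat_of_ord (tnth t (Ordinal hiL))) et; rewrite !tnth_mktuple /= !inordK //.
  by rewrite ltnS (allP a2) // mem_nth // -ss.
by rewrite ltnS (allP a1) // mem_nth.
Qed.

Definition CodeT n s G Tb := (PT G n * PT s (n + G) * PT Tb 1 * PT n (n + G))%type.

Definition code n s G Tb (C : circuit) : CodeT n s G Tb :=
  (pad G n (fan (gates C)), pad s (n + G) (srcs (gates C)),
   pad Tb 1 (map nat_of_bool (tabs (gates C))), pad n (n + G) (outs C)).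

Definition NF n s G Tb C := [/\ csize C <= s, size (gates C) <= G,
  all (fun g => size (gin g) <= n) (gates C) & size (tabs (gates C)) <= Tb].

Lemma srcs_bound n G C : wf_circuit n C -> size (gates C) <= G ->
  all (fun a => a <= n + G) (srcs (gates C)).
Proof.
case=> wf _ hG; apply/allP => j /flattenP [s hs hj].
have [k hk es] := nthP [::] hs; rewrite size_map in hk.
rewrite -es (nth_map g0) // in hj.
have := allP (wf k hk) j hj => h.
apply: ltnW; apply: (leq_trans h); rewrite leq_add2l; exact: ltnW (leq_trans hk hG).
Qed.

Lemma code_det n s G Tb C1 C2 (f1 f2 : operator n) :
  NF n s G Tb C1 -> NF n s G Tb C2 -> computes C1 f1 -> computes C2 f2 ->
  @code n s G Tb C1 = @code n s G Tb C2 -> f1 = f2.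
Proof.
move=> [c1 g1 a1 t1] [c2 g2 a2 t2] [w1 h1] [w2 h2] e.
have e1 := congr1 (fun c => c.1.1.1) e; have e2 := congr1 (fun c => c.1.1.2) e.
have e3 := congr1 (fun c => c.1.2) e; have e4 := congr1 (fun c => c.2) e.
simpl in e1, e2, e3, e4.
have ef : fan (gates C1) = fan (gates C2).
  by apply: (pad_inj _ _ _ _ e1); rewrite ?size_map // /fan all_map.
have es : srcs (gates C1) = srcs (gates C2).
  apply: (pad_inj _ _ (srcs_bound w1 g1) (srcs_bound w2 g2) e2).
    by rewrite /srcs size_flatten /shape -map_comp.
  by rewrite /srcs size_flatten /shape -map_comp.
have et : tabs (gates C1) = tabs (gates C2).
  have hb (l : seq bool) : all (fun a => a <= 1) (map nat_of_bool l).
    by apply/allP => a /mapP [b _ ->]; case: b.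
  have := pad_inj _ _ (hb _) (hb _) e3; rewrite !size_map => /(_ t1 t2).
  by apply: inj_map; do 2 case.
have eo : outs C1 = outs C2.
  case: w1 => _ [so1 ao1]; case: w2 => _ [so2 ao2].
  apply: (pad_inj _ _ _ _ e4); rewrite ?so1 ?so2 //.
    apply/allP => j hj; apply: ltnW; apply: (leq_trans (allP ao1 j hj)); by rewrite leq_add2l.
  apply/allP => j hj; apply: ltnW; apply: (leq_trans (allP ao2 j hj)); by rewrite leq_add2l.
apply/ffunP => x; apply: val_inj; rewrite -h1 -h2 eo.
by rewrite (code_eval _ ef es et).
Qed.
From Stdlib Require Import Lia.

Lemma pow_bound d n : d <= n -> n * 2 ^ d <= n + d * 2 ^ n.
Proof.
case: d => [|d] hd; first by rewrite muln1 leq_addr.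
apply: leq_trans (leq_addl _ _).
have h : n - d.+1 < 2 ^ (n - d.+1) := ltn_expl _ (isT : 1 < 2).
rewrite -(subnKC hd) expnD.
move: h; set m := n - d.+1; set Q := 2 ^ m; set R := 2 ^ d.+1 => h.
rewrite mulnCA [_ * R]mulnC leq_mul2l; apply/orP; right.
move/ssrnat.leP: h => h; apply/ssrnat.leP; rewrite -?multE -?plusE; nia.
Qed.

Lemma size_tabs gs : size (tabs gs) = sumn (map (fun g => 2 ^ size (gin g)) gs).
Proof. by rewrite /tabs size_flatten tabs_shape /fan -map_comp. Qed.

Lemma tabs_size n gs : all (fun g => size (gin g) <= n) gs ->
  n * size (tabs gs) <= n * size gs + sumn (fan gs) * 2 ^ n.
Proof.
rewrite size_tabs; elim: gs => [|g gs IH] /=; first by rewrite muln0.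
move=> /andP [h1 h2]; have := pow_bound h1; have := IH h2.
set a := sumn _; set b := sumn _; set c := size gs; set d := size (gin g).
set Q := 2 ^ n; set R := 2 ^ d => /ssrnat.leP H1 /ssrnat.leP H2; apply/ssrnat.leP.
rewrite -?multE -?plusE in H1 H2 *; lia.
Qed.

Lemma pbP (P : Prop) : reflect P (pb P).
Proof. by rewrite /pb; case: excluded_middle_informative => h; constructor. Qed.
Definition sN n := n ^ 2 %/ 4.
Definition GN n := (sN n).+2.
Definition TbN n := GN n + sN n * 2 ^ n %/ n.

Lemma bad_NF n (f : operator n) : 0 < n ->
  ~~ pb (s_ge f ((4%:R : rat)^-1 * (n ^ 2)%:R)%R) ->
  exists C, NF n (sN n) (GN n) (TbN n) C /\ computes C f.
Proof.
move=> n0 /pbP hn.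
set r := ((4%:R : rat)^-1 * (n ^ 2)%:R)%R in hn.
have [C [hC hr]] : exists C, computes C f /\ ~ (r <= (csize C)%:~R)%R.
  apply: NNPP => H; apply: hn => C hc; apply: NNPP => h; apply: H; exists C; by split.
have hlt : ((csize C)%:R < r :> rat)%R by rewrite ltNge; apply/negP.
rewrite /r ltr_pdivlMl ?ltr0n // -natrM ltr_nat in hlt.
have hs : csize C <= sN n by rewrite /sN leq_divRL // mulnC ltnW.
have [C' [hC' [h1 [h2 h3]]]] := normalize hC.
exists C'; split => //; split.
- exact: leq_trans h1 hs.
- by apply: leq_trans h2 _; rewrite /GN ltnS ltnS.
- exact: h3.
rewrite /TbN -(divnMDl _ _ n0) leq_divRL // mulnC.
apply: leq_trans (tabs_size h3) _; rewrite [GN n * n]mulnC; apply: leq_add.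
  by rewrite leq_mul2l (leq_trans h2 _) ?orbT // /GN ltnS ltnS.
by rewrite leq_mul2r (leq_trans h1 hs) orbT.
Qed.

Lemma bad_card n : 0 < n ->
  #|[set f : operator n | ~~ pb (s_ge f ((4%:R : rat)^-1 * (n ^ 2)%:R)%R)]| <=
  #|{: option (CodeT n (sN n) (GN n) (TbN n))}|.
Proof.
move=> n0.
set B := [set f : operator n | _].
pose h (f : operator n) := [pick c : CodeT n (sN n) (GN n) (TbN n) |
  pb (exists C, [/\ NF n (sN n) (GN n) (TbN n) C, computes C f & @code n (sN n) (GN n) (TbN n) C = c])].
have hB f : f \in B -> exists c, h f = Some c /\
    exists C, [/\ NF n (sN n) (GN n) (TbN n) C, computes C f & @code n (sN n) (GN n) (TbN n) C = c].
  rewrite inE => /(bad_NF n0) [C [hN hc]].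
  rewrite /h; case: pickP => [c /pbP hc'|hnone]; first by exists c.
  by have := hnone (@code n _ _ _ C); move/negP; case; apply/pbP; exists C.
rewrite -(card_in_imset (f := h)); first exact: max_card.
move=> f1 f2 /hB [c1 [e1 [C1 [N1 c1' k1]]]] /hB [c2 [e2 [C2 [N2 c2' k2]]]].
rewrite e1 e2 => [[ec]]; apply: (code_det N1 N2 c1' c2'); by rewrite k1 k2 ec.
Qed.
Lemma cube_exp n : 10 <= n -> n ^ 3 <= 2 ^ n.
Proof.
elim: n => // n IH; rewrite leq_eqVlt => /orP [/eqP <- // | h].
have H := IH h.
apply: leq_trans (_ : 2 * n ^ 3 <= _); last by rewrite [2 ^ _]expnS leq_mul2l H orbT.
rewrite !expnS expn0 !muln1.
move: h => /ssrnat.leP h; apply/ssrnat.leP; rewrite -?multE -?plusE; nia.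
Qed.

Lemma expn_mono m1 m2 e : m1 <= m2 -> m1 ^ e <= m2 ^ e.
Proof. by case: e => // e h; rewrite leq_exp2r. Qed.

Lemma arith n : 20 <= n ->
  #|{: option (CodeT n (sN n) (GN n) (TbN n))}| * 2 ^ n <= 2 ^ (n * 2 ^ n).
Proof.
move=> n20; have n0 : 0 < n by apply: leq_trans n20.
rewrite card_option !card_prod !card_tuple !card_ord.
set s := sN n; set G := GN n; set T := TbN n; set K := n + G; set Q := 2 ^ n.
set D := s * Q %/ n.
have hQ : n ^ 3 <= Q by apply: cube_exp; apply: leq_trans n20.
have hs : s * 4 <= n ^ 2 by rewrite -leq_divRL.
have hD : D * n <= s * Q by apply: leq_divM.
have eG : G = s + 2 by rewrite /G /GN addn2.
have eT : T = G + D by [].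
have eK : K = n + G by [].
rewrite !expnS expn0 !muln1 in hQ hs.
have b1 : n.+1 <= Q by apply: ltn_expl.
have bK : K.+1 <= Q.
  apply: leq_trans hQ; rewrite eK eG.
  move/ssrnat.leP: hs => hs'; move/ssrnat.leP: n20 => hn; apply/ssrnat.leP.
  rewrite -?multE -?plusE in hs' hn *; nia.
have bG : G.+1 <= Q by apply: leq_trans bK; rewrite ltnS /K leq_addl.
have bs : s.+1 <= Q by apply: leq_trans bG; rewrite ltnS eG leq_addr.
have bT : T.+1 <= 2 ^ T by apply: ltn_expl.
set E0 := (n + n * G) + (n + n * s) + (T + T) + (n + n * n).
have p1 : n.+1 ^ G <= 2 ^ (n * G) by rewrite expnM; exact: expn_mono.
have p2 : K.+1 ^ s <= 2 ^ (n * s) by rewrite expnM; exact: expn_mono.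
have p3 : K.+1 ^ n <= 2 ^ (n * n) by rewrite expnM; exact: expn_mono.
have hX : G.+1 * n.+1 ^ G * (s.+1 * K.+1 ^ s) * (T.+1 * 2 ^ T) * (n.+1 * K.+1 ^ n) <= 2 ^ E0.
  apply: leq_trans (leq_mul (leq_mul (leq_mul (leq_mul bG p1) (leq_mul bs p2))
     (leq_mul bT (leqnn _))) (leq_mul b1 p3)) _.
  by rewrite /Q -!expnD.
apply: leq_trans (_ : 2 ^ (E0.+1 + n) <= _).
  rewrite expnD leq_mul2r; apply/orP; right.
  apply: (@leq_trans (2 ^ E0).+1); first by rewrite ltnS.
  by rewrite [2 ^ E0.+1]expnS mul2n -addnn -addn1 leq_add2l expn_gt0.
rewrite leq_exp2l // /E0 eT eG.
move: hD hs hQ n20; rewrite -/Q.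
move=> /ssrnat.leP h1 /ssrnat.leP h2 /ssrnat.leP h3 /ssrnat.leP h4; apply/ssrnat.leP.
rewrite -?multE -?plusE in h1 h2 h3 h4 *; nia.
Qed.
Local Open Scope ring_scope.

Theorem theorem1 :
  exists c : rat, 0 < c /\
    forall eps : rat, 0 < eps ->
      exists N : nat, forall n : nat, (N <= n)%N ->
        1 - eps <=
          (#|[set f : operator n | pb (s_ge f (c * (n ^ 2)%:R))]|%:R
            / #|{: operator n}|%:R : rat).
Proof.
exists (4%:R)^-1; split; first by rewrite invr_gt0 ltr0n.
move=> eps he.
exists (maxn 20 (Num.Def.archi_bound eps^-1)) => n hn.
have n20 : (20 <= n)%N := leq_trans (leq_maxl _ _) hn.
have hb : (Num.Def.archi_bound eps^-1 <= n)%N := leq_trans (leq_maxr _ _) hn.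
have n0 : (0 < n)%N by apply: leq_trans n20.
set A := [set f : operator n | _].
have eT : #|{: operator n}| = (2 ^ (n * 2 ^ n))%N.
  by rewrite card_ffun !card_tuple card_bool expnM.
have hBc := bad_card n0.
have eB : ~: A = [set f : operator n | ~~ pb (s_ge f ((4%:R : rat)^-1 * (n ^ 2)%:R))].
  by apply/setP => f; rewrite !inE.
have hsum := cardsC A.
have hB : (#|~: A| * 2 ^ n <= #|{: operator n}|)%N.
  by rewrite eB eT; apply: leq_trans (arith n20); rewrite leq_mul2r hBc orbT.
move: hsum hB; set B := #|~: A|; set T := #|{: operator n}| => hsum hB.
have T0 : (0 < T)%N by rewrite /T eT expn_gt0.
rewrite ler_pdivlMr ?ltr0n // -hsum natrD mulrBl mul1r.
rewrite -addrA gerDl subr_le0 -natrD hsum.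
have h1 : 1 < eps * 2%:R ^+ n.
  have := upper_nthrootP hb => h.
  by rewrite -[X in X < _](mulfV (lt0r_neq0 he)) ltr_pM2l.
apply: (@le_trans _ _ (B%:R * (eps * 2%:R ^+ n))).
  by rewrite ler_peMr ?ler0n // ltW.
rewrite mulrCA ler_pM2l // -natrX -natrM ler_nat.
exact: hB.
Qed.
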